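(* Let $E$ be a finite set and $\underline I=(I_\omega)_{\omega\in E}$ a family of non-empty finite sets. For causal orders $\Omega,\Omega'$ on $E$, $$\mathrm{ExtHist}(\Omega,\underline I)\cap\mathrm{ExtHist}(\Omega',\underline I)=\mathrm{ExtHist}(\Omega\vee\Omega',\underline I)\quad\text{and}\quad \mathrm{Hist}(\Omega,\underline I)\vee\mathrm{Hist}(\Omega',\underline I)=\mathrm{Hist}(\Omega\vee\Omega',\underline I).$$
   Context: A causal order $\Omega$ on $E$ is a preorder $\le_\Omega$; $\downarrow\omega=\{\xi:\xi\le_\Omega\omega\}$; $\Lambda(\Omega)$ is its set of lowersets. $\Omega\vee\Omega'$ is the order whose relation is the transitive closure of $\le_\Omega\cup\le_{\Omega'}$. Partial functions on $\underline I$: $f$ with $\mathrm{dom}(f)\subseteq E$, $f(\omega)\in I_\omega$. $\mathrm{Hist}(\Omega,\underline I)=\bigcup_{\xi\in E}\prod_{\omega\in\downarrow\xi}I_\omega$; $\mathrm{ExtHist}(\Omega,\underline I)=\bigcup_{U\in\Lambda(\Omega)}\prod_{\omega\in U}I_\omega$. Compatible = agreeing on common domain; compatible sets $\mathcal F$ have join $\bigvee\mathcal F$ (union). For a set $\Theta$, $\mathrm{Ext}(\Theta)=\{\bigvee\mathcal F:\emptyset\ne\mathcal F\subseteq\Theta\text{ compatible}\}$; for a set $W$, $\mathrm{Prime}(W)=\{w\in W:\text{for all compatible }\mathcal F\subseteq W,\ w=\bigvee\mathcal F\Rightarrow w\in\mathcal F\}$. The join of spaces of input histories is $\Theta\vee\Theta'=\mathrm{Prime}(\mathrm{Ext}(\Theta)\cap\mathrm{Ext}(\Theta'))$.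 *)

(* Defs.v *)
From mathcomp Require Import all_boot.
From Stdlib Require Import Relations.

Set Implicit Arguments.
Unset Strict Implicit.
Unset Printing Implicit Defensive.

Section Defs.
Variables (E : finType) (I : E -> finType).

Definition causal_order (le : E -> E -> Prop) : Prop :=
  (forall x, le x x) /\ (forall x y z, le x y -> le y z -> le x z).

Definition join_order (le1 le2 : E -> E -> Prop) : E -> E -> Prop :=
  clos_trans E (fun a b => le1 a b \/ le2 a b).

Definition down (le : E -> E -> Prop) (xi : E) : E -> Prop := fun w => le w xi.

Definition lowerset (le : E -> E -> Prop) (U : E -> Prop) : Prop :=
  forall x y, le x y -> U y -> U x.

Definition pfun := forall w : E, option (I w).

Definition dom (f : pfun) : E -> Prop := fun w => f w <> None.

(* f in prod_{w in U} I_w, i.e. dom f = U *)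
Definition has_dom (U : E -> Prop) (f : pfun) : Prop := forall w, dom f w <-> U w.

Definition Hist (le : E -> E -> Prop) : pfun -> Prop :=
  fun f => exists xi, has_dom (down le xi) f.

Definition ExtHist (le : E -> E -> Prop) : pfun -> Prop :=
  fun f => exists U, lowerset le U /\ has_dom U f.

Definition compatible2 (f g : pfun) : Prop :=
  forall w x y, f w = Some x -> g w = Some y -> x = y.

Definition compatible (F : pfun -> Prop) : Prop :=
  forall f g, F f -> F g -> compatible2 f g.

Definition is_join (F : pfun -> Prop) (h : pfun) : Prop :=
  forall w x, h w = Some x <-> exists f, F f /\ f w = Some x.

Definition Ext (Th : pfun -> Prop) : pfun -> Prop :=
  fun h => exists F : pfun -> Prop,
    (exists f, F f) /\ (forall f, F f -> Th f) /\ compatible F /\ is_join F h.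

Definition Prime (W : pfun -> Prop) : pfun -> Prop :=
  fun w => W w /\ forall F : pfun -> Prop,
    (forall f, F f -> W f) -> compatible F -> is_join F w -> F w.

Definition join_space (Th Th' : pfun -> Prop) : pfun -> Prop :=
  Prime (fun h => Ext Th h /\ Ext Th' h).

End Defs.

(* Main.v *)
Require Import Defs.
From mathcomp Require Import all_boot.
From Stdlib Require Import Relations ClassicalEpsilon FunctionalExtensionality.

Section Aux.
Variables (E : finType) (I : E -> finType).

Definition restr (P : E -> Prop) (h : pfun I) : pfun I :=
  fun w => if excluded_middle_informative (P w) then h w else None.

Lemma dom_some (g : pfun I) w : dom g w -> exists v, g w = Some v.
Proof. unfold dom; destruct (g w) as [v|]; [eauto | congruence]. Qed.
Arguments dom_some {g w}.

Lemma lowerset_ext le (U V : E -> Prop) :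
  (forall w, U w <-> V w) -> lowerset le U -> lowerset le V.
Proof. intros H L x y Hxy Hy. apply H. apply (L x y Hxy). apply H; auto. Qed.

Lemma has_dom_ext (U : E -> Prop) (f : pfun I) :
  has_dom U f -> forall w, U w <-> dom f w.
Proof. intros H w; split; apply H. Qed.

Lemma restr_dom le (h : pfun I) xi :
  (forall x y z, le x y -> le y z -> le x z) ->
  lowerset le (dom h) -> dom h xi -> has_dom (down le xi) (restr (down le xi) h).
Proof.
  intros T L Hxi w; unfold restr, down, dom.
  destruct (excluded_middle_informative (le w xi)) as [l|n]; split; auto.
  - intros _. exact (L w xi l Hxi).
  all: intros H; exfalso; first [apply H; reflexivity | auto].
Qed.

Lemma restr_sub P (h : pfun I) w x : restr P h w = Some x -> h w = Some x.
Proof.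
  unfold restr; intros H; destruct (excluded_middle_informative (P w)); [exact H | discriminate H].
Qed.

Definition fam le (h : pfun I) : pfun I -> Prop :=
  fun g => exists xi, dom h xi /\ g = restr (down le xi) h.

Lemma fam_compat le h : compatible (fam le h).
Proof.
  intros f g [a [_ ->]] [b [_ ->]] w x y Hx Hy.
  apply (restr_sub _ _ _ _) in Hx; apply (restr_sub _ _ _ _) in Hy. congruence.
Qed.

Lemma fam_join le h : (forall x, le x x) -> is_join (fam le h) h.
Proof.
  intros R w x; split.
  - intros Hw. exists (restr (down le w) h); split.
    + exists w; split; [unfold dom; congruence | reflexivity].
    + unfold restr, down. destruct (excluded_middle_informative (le w w)); [auto|].
      exfalso; auto.
  - intros [f [[xi [_ ->]] Hf]]. exact (restr_sub _ _ _ _ Hf).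
Qed.

Lemma ext_hist_char le (Hc : causal_order le) (h : pfun I) :
  Ext (Hist le) h <-> (exists w, dom h w) /\ lowerset le (dom h).
Proof.
  destruct Hc as [R T]; split.
  - intros [F [[f0 Hf0] [HH [Hcomp Hj]]]]. split.
    + destruct (HH f0 Hf0) as [xi D].
      assert (dom f0 xi) by (apply D; apply R).
      destruct (dom_some H) as [v Hv].
      exists xi. assert (h xi = Some v) by (apply Hj; eauto).
      unfold dom; congruence.
    + intros x y Hxy Hy. destruct (dom_some Hy) as [v Hv].
      apply Hj in Hv. destruct Hv as [f [Ff Hfy]].
      destruct (HH f Ff) as [xi D].
      assert (le y xi) by (apply D; unfold dom; congruence).
      assert (dom f x) by (apply D; unfold down; eauto).
      destruct (dom_some H0) as [u Hu].
      assert (h x = Some u) by (apply Hj; eauto).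
      unfold dom; congruence.
  - intros [[w0 Hw0] L]. exists (fam le h). split; [|split; [|split]].
    + exists (restr (down le w0) h); exists w0; auto.
    + intros g [xi [Hxi ->]]. exists xi. apply restr_dom; auto.
    + apply fam_compat.
    + apply fam_join; auto.
Qed.

Lemma lower_join le1 le2 (U : E -> Prop) :
  lowerset le1 U -> lowerset le2 U -> lowerset (join_order le1 le2) U.
Proof.
  intros L1 L2 x y H. induction H as [x y [h|h]|x y z _ IH1 _ IH2]; eauto.
Qed.

Lemma lower_join_inv1 le1 le2 (U : E -> Prop) :
  lowerset (join_order le1 le2) U -> lowerset le1 U.
Proof. intros L x y H. apply L. apply t_step. auto. Qed.

Lemma lower_join_inv2 le1 le2 (U : E -> Prop) :
  lowerset (join_order le1 le2) U -> lowerset le2 U.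
Proof. intros L x y H. apply L. apply t_step. auto. Qed.

Lemma ext_hist_dom le (f : pfun I) : ExtHist le f <-> lowerset le (dom f).
Proof.
  split.
  - intros [U [L D]]. eapply lowerset_ext; [|exact L]. apply has_dom_ext; auto.
  - intros L. exists (dom f); split; auto. intros w; tauto.
Qed.

Lemma prime_char le (Hc : causal_order le) (W : pfun I -> Prop)
  (HW : forall h, W h <-> (exists w, dom h w) /\ lowerset le (dom h)) h :
  Prime W h <-> Hist le h.
Proof.
  destruct Hc as [R T]. split.
  - intros [Wh P]. apply HW in Wh. destruct Wh as [_ L].
    assert (fam le h h).
    { apply (P (fam le h)).
      - intros g [xi [Hxi ->]]. apply HW. split.
        + exists xi. apply (restr_dom _ _ _ T L Hxi). unfold down; auto.
        + eapply lowerset_ext.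
          * apply has_dom_ext. apply (restr_dom _ _ _ T L Hxi).
          * intros x y Hxy Hy. unfold down in *; eauto.
      - apply fam_compat.
      - apply fam_join; auto. }
    destruct H as [xi [Hxi E1]]. exists xi. rewrite E1.
    apply restr_dom; auto.
  - intros [xi D].
    assert (L : lowerset le (dom h)).
    { eapply lowerset_ext; [apply has_dom_ext; exact D|].
      intros x y Hxy Hy; unfold down in *; eauto. }
    split.
    + apply HW. split; auto. exists xi. apply D. apply R.
    + intros F HF Hcomp Hj.
      assert (dom h xi) by (apply D; apply R).
      destruct (dom_some H) as [v Hv].
      apply Hj in Hv. destruct Hv as [f [Ff Hfxi]].
      assert (f = h).
      { apply functional_extensionality_dep. intros w.
        destruct (h w) as [u|] eqn:Hw.
        - assert (le w xi) by (apply D; unfold dom; congruence).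
          destruct (proj1 (HW f) (HF f Ff)) as [_ Lf].
          assert (dom f w) by (apply (Lf w xi H0); unfold dom; congruence).
          destruct (dom_some H1) as [u' Hu'].
          assert (h w = Some u') by (apply Hj; eauto). congruence.
        - destruct (f w) as [u'|] eqn:Hf; auto.
          assert (h w = Some u') by (apply Hj; eauto). congruence. }
      subst; auto.
Qed.

End Aux.

Theorem proposition8 (E : finType) (I : E -> finType)
  (HI : forall w : E, inhabited (I w))
  (le1 le2 : E -> E -> Prop)
  (H1 : causal_order le1) (H2 : causal_order le2) :
  (forall f : pfun I,
     ExtHist le1 f /\ ExtHist le2 f <-> ExtHist (join_order le1 le2) f) /\
  (forall f : pfun I,
     join_space (Hist le1) (Hist le2) f <-> Hist (I:=I) (join_order le1 le2) f).
Proof.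
  assert (P1 : forall f : pfun I,
     ExtHist le1 f /\ ExtHist le2 f <-> ExtHist (join_order le1 le2) f).
  { intros f. rewrite !ext_hist_dom. split.
    - intros [A B]. apply lower_join; auto.
    - intros A. split; [eapply lower_join_inv1|eapply lower_join_inv2]; eauto. }
  split; auto.
  assert (HJ : causal_order (join_order le1 le2)).
  { split.
    - intros x. apply t_step. left. apply H1.
    - intros x y z A B. eapply t_trans; eauto. }
  intros f. unfold join_space. apply prime_char; auto.
  intros h. rewrite (ext_hist_char _ _ _ H1) (ext_hist_char _ _ _ H2).
  pose proof (P1 h) as P. rewrite !ext_hist_dom in P. tauto.
Qed.
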